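(* Let $G$ be an SE-graph, $\phi$ an $(I|J)$-flow and $\phi'$ an $(I'|J')$-flow in $G$, and let $P_1,\dots,P_k$ be the exchange paths of the double flow $(\phi,\phi')$. Then: (i) $k=(|I^\circ|+|I^\bullet|+|J^\circ|+|J^\bullet|)/2$; (ii) the set of endvertices of $P_1,\dots,P_k$ is $\{r_i:i\in I^\circ\cup I^\bullet\}\cup\{c_j:j\in J^\circ\cup J^\bullet\}$, and each $P_i$ connects either a vertex of $\{r_i:i\in I^\circ\}$ with one of $\{r_i:i\in I^\bullet\}$, or a vertex of $\{c_j:j\in J^\circ\}$ with one of $\{c_j:j\in J^\bullet\}$, or a vertex of $\{r_i:i\in I^\circ\}$ with one of $\{c_j:j\in J^\circ\}$, or a vertex of $\{r_i:i\in I^\bullet\}$ with one of $\{c_j:j\in J^\bullet\}$; (iii) in each path $P_i$, traversed from one end to the other, the edges of $\phi$ and the edges of $\phi'$ have opposite directions (say, all edges of $\phi$ on $P_i$ are traversed forward and all edges of $\phi'$ backward).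
   Context: Notation: $[p]=\{1,\dots,p\}$; $\mathcal E^{m,n}$ is the set of pairs $(I|J)$, $I\subseteq[m]$, $J\subseteq[n]$, $|I|=|J|$. An SE-graph is a finite directed graph $G=(V,E)$ embedded in the plane (planar with a fixed layout) such that: every edge is either horizontal (H-edge) directed to the right or vertical (V-edge) directed downward; there are distinguished sources $r_1,\dots,r_m$ on a vertical line in this order upward and sinks $c_1,\dots,c_n$ on a horizontal line in this order from left to right; sources are incident only with H-edges, sinks only with V-edges; every vertex lies on a directed path from a source to a sink. For $(I|J)\in\mathcal E^{m,n}$, an $(I|J)$-flow is a set of pairwise vertex-disjoint directed paths from $\{r_i:i\in I\}$ to $\{c_j:j\in J\}$. For $(I|J),(I'|J')\in\mathcal E^{m,n}$ put $I^\circ=I\setminus I'$, $I^\bullet=I'\setminus I$, $J^\circ=J\setminus J'$, $J^\bullet=J'\setminus J$. Given an $(I|J)$-flow $\phi$ and an $(I'|J')$-flow $\phi'$ (a double flow), let $E_\phi,E_{\phi'}$ be their edge sets and $U=E_\phi\triangle E_{\phi'}$. In the subgraph $\langle U\rangle$ formed by the edges of $U$, every vertex has degree 1, 2 or 4. Split each vertex $v$ of degree 4 into two nearby vertices $v',v''$ so that the edges of $U$ entering $v$ now enter $v'$ and those leaving $v$ now leave $v''$; the resulting planar graph $\langle U\rangle'$ has all degrees at most 2, so it is a disjoint union of (undirected) simple paths $P'_1,\dots,P'_k$ and simple cycles. The images $P_1,\dots,P_k$ of $P'_1,\dots,P'_k$ in $G$ are called the exchange paths of $(\phi,\phi')$.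 *)

(* Defs.v *)
From HB Require Import structures.
From mathcomp Require Import all_boot all_order all_algebra.
Set Implicit Arguments. Unset Strict Implicit. Unset Printing Implicit Defensive.
Import Order.TTheory GRing.Theory Num.Theory.
Local Open Scope ring_scope.

(* Raw data of a finite directed graph with a straight-line layout in the
   plane R^2 (coordinates px, py), sources r_1..r_m and sinks c_1..c_n. *)
Record sedata (R : realFieldType) (m n : nat) := SEData {
  vert : finType;
  edge : finType;
  tail : edge -> vert;
  head : edge -> vert;
  px : vert -> R;
  py : vert -> R;
  src : 'I_m -> vert;
  snk : 'I_n -> vert
}.

Section Defs.
Variables (R : realFieldType) (m n : nat) (G : sedata R m n).
Local Notation V := (vert G).
Local Notation E := (edge G).

Definition isH (e : E) : Prop :=
  py (tail e) = py (head e) /\ px (tail e) < px (head e).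
Definition isV (e : E) : Prop :=
  px (tail e) = px (head e) /\ py (head e) < py (tail e).

(* the point (a,b) lies on the (closed, axis-parallel) segment drawing e *)
Definition on_edge (e : E) (a b : R) : Prop :=
  Num.min (px (tail e)) (px (head e)) <= a <= Num.max (px (tail e)) (px (head e))
  /\ Num.min (py (tail e)) (py (head e)) <= b <= Num.max (py (tail e)) (py (head e)).

Fixpoint dwalk (u : V) (s : seq E) (w : V) : Prop :=
  match s with
  | [::] => u = w
  | e :: s' => tail e = u /\ dwalk (head e) s' w
  end.

Definition walk_verts (u : V) (s : seq E) : seq V := u :: map (@head _ _ _ G) s.

Definition is_SEgraph : Prop :=
      (forall e : E, isH e \/ isV e) /\
      (forall u v : V, px u = px v -> py u = py v -> u = v) /\
      (forall (e f : E) (a b : R), e <> f -> on_edge e a b -> on_edge f a b ->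
        exists v : V, (v = tail e \/ v = head e) /\ (v = tail f \/ v = head f)
                      /\ px v = a /\ py v = b) /\
      (forall (v : V) (e : E), on_edge e (px v) (py v) -> v = tail e \/ v = head e) /\
      (forall i j : 'I_m, px (src G i) = px (src G j)) /\
      (forall i j : 'I_m, (i < j)%N -> py (src G i) < py (src G j)) /\
      (forall i j : 'I_n, py (snk G i) = py (snk G j)) /\
      (forall i j : 'I_n, (i < j)%N -> px (snk G i) < px (snk G j)) /\
      (forall (i : 'I_m) (j : 'I_n), src G i <> snk G j) /\
      (forall (e : E) (i : 'I_m), tail e = src G i \/ head e = src G i -> isH e) /\
      (forall (e : E) (j : 'I_n), tail e = snk G j \/ head e = snk G j -> isV e) /\
      (forall v : V, exists (i : 'I_m) (j : 'I_n) (s : seq E),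
        dwalk (src G i) s (snk G j) /\ v \in walk_verts (src G i) s).

(* An (I|J)-flow, given by a path p i from r_i to c_(t i) for each i in I;
   the paths are pairwise vertex-disjoint and their ends are exactly
   {r_i : i in I} and {c_j : j in J}. *)
Definition is_flow (I : {set 'I_m}) (J : {set 'I_n})
    (p : 'I_m -> seq E) (t : 'I_m -> 'I_n) : Prop :=
  [/\ #|I| = #|J|,
      forall i, i \in I -> dwalk (src G i) (p i) (snk G (t i)),
      forall i i', i \in I -> i' \in I -> i <> i' -> forall v : V,
        v \in walk_verts (src G i) (p i) -> v \notin walk_verts (src G i') (p i') &
      [set t i | i in I] = J].

Definition flow_edges (I : {set 'I_m}) (p : 'I_m -> seq E) : {set E} :=
  \bigcup_(i in I) [set e in p i].

Definition symdiff (A B : {set E}) : {set E} := (A :\: B) :|: (B :\: A).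

(* The split graph <U>' : nodes are pairs (v,b); a vertex v of degree 4 in
   <U> is split into (v,false) (receiving the entering edges, v') and
   (v,true) (emitting the leaving edges, v''); other vertices v are (v,false). *)
Definition degU (U : {set E}) (v : V) : nat :=
  #|[set e in U | tail e == v]| + #|[set e in U | head e == v]|.

Definition node (U : {set E}) (v : V) (b : bool) : V * bool :=
  if degU U v == 4%N then (v, b) else (v, false).

Definition ends (U : {set E}) (e : E) : (V * bool) * (V * bool) :=
  (node U (tail e) true, node U (head e) false).

Definition ndeg (U : {set E}) (x : V * bool) : nat :=
  #|[set e in U | (ends U e).1 == x]| + #|[set e in U | (ends U e).2 == x]|.

(* undirected walk in <U>' from x to y; each step (e,d) uses edge e of U,
   traversed forward (tail to head) if d = true, backward if d = false. *)
Fixpoint uwalk (U : {set E}) (x : V * bool) (s : seq (E * bool)) (y : V * bool)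
    : Prop :=
  match s with
  | [::] => x = y
  | (e, d) :: s' =>
      [/\ e \in U,
          (if d then (ends U e).1 else (ends U e).2) = x &
          uwalk U (if d then (ends U e).2 else (ends U e).1) s' y]
  end.

(* a traversal, from one end to the other, of a path component of <U>' *)
Definition exch_trav (U : {set E}) (x : V * bool) (s : seq (E * bool))
    (y : V * bool) : Prop :=
  [/\ uwalk U x s y, s != [::], uniq (map fst s), ndeg U x = 1%N & ndeg U y = 1%N].

(* an exchange path, identified with its (nonempty) edge set *)
Definition exch_path (U : {set E}) (P : {set E}) : Prop :=
  exists x s y, exch_trav U x s y /\ P = [set e in map fst s].

Definition Rset (K : {set 'I_m}) : {set V} := [set src G i | i in K].
Definition Cset (K : {set 'I_n}) : {set V} := [set snk G j | j in K].

Definition connects (a b : V) (A B : {set V}) : Prop :=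
  (a \in A /\ b \in B) \/ (a \in B /\ b \in A).

End Defs.

(* Main.v *)
Require Import Defs.
From HB Require Import structures.
From mathcomp Require Import all_boot all_order all_algebra.
From mathcomp Require Import zify.
From Stdlib Require Import Classical_Prop.
Import Order.TTheory GRing.Theory Num.Theory.
Set Implicit Arguments. Unset Strict Implicit. Unset Printing Implicit Defensive.

Section Graph.
Variables (R : realFieldType) (m n : nat) (G : sedata R m n).
Hypothesis HG : is_SEgraph G.
Local Notation V := (vert G).
Local Notation E := (edge G).
Local Notation hd := (@Defs.head R m n G).

Definition pot (v : V) : R := (px v - py v)%R.

Lemma pot_edge (e : E) : (pot (tail e) < pot (hd e))%R.
Proof.
case: HG => H1 _; rewrite /pot.
case: (H1 e) => [[-> lt]|[-> lt]].
  by rewrite ltrD2r.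
by rewrite ltrD2l ltrN2.
Qed.

Lemma src_inj : injective (src G).
Proof.
case: HG => _ [_ [_ [_ [_ [H6 _]]]]] i j eq.
case: (ltngtP i j) => [lt|lt|/val_inj //]; first by have := H6 _ _ lt; rewrite eq ltxx.
by have := H6 _ _ lt; rewrite eq ltxx.
Qed.

Lemma snk_inj : injective (snk G).
Proof.
case: HG => _ [_ [_ [_ [_ [_ [_ [H8 _]]]]]]] i j eq.
case: (ltngtP i j) => [lt|lt|/val_inj //]; first by have := H8 _ _ lt; rewrite eq ltxx.
by have := H8 _ _ lt; rewrite eq ltxx.
Qed.

Lemma src_snk i j : src G i <> snk G j.
Proof. by case: HG => _ [_ [_ [_ [_ [_ [_ [_ [H9 _]]]]]]]]. Qed.

Lemma edge_mono (e : E) : (px (tail e) <= px (hd e))%R /\ (py (hd e) <= py (tail e))%R.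
Proof.
case: HG => H1 _.
case: (H1 e) => [[-> lt]|[-> lt]]; split => //; exact: ltW.
Qed.

Lemma dwalk_mono (u : V) (s : seq E) (w z : V) : dwalk u s w -> z \in walk_verts u s ->
  [/\ (px u <= px z)%R, (py z <= py u)%R, (px z <= px w)%R & (py w <= py z)%R].
Proof.
elim: s u z => [|e s IH] u z /=.
  by move=> -> ; rewrite /walk_verts inE => /eqP ->; rewrite !lexx.
move=> [te dw]; rewrite /walk_verts /= inE => /orP [/eqP ->|zin].
  have [_ _ h1 h2] := IH _ _ dw (mem_head _ _).
  have [m1 m2] := edge_mono e; rewrite te in m1 m2.
  by rewrite !lexx; split => //; [exact: le_trans m1 h1|exact: le_trans h2 m2].
have [a b c d] := IH _ _ dw zin.
have [m1 m2] := edge_mono e; rewrite te in m1 m2.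
by split => //; [exact: le_trans m1 a|exact: le_trans b m2].
Qed.

Lemma no_in_src (e : E) i : hd e <> src G i.
Proof.
move=> he.
case: HG => _ [_ [_ [_ [H5 [_ [_ [_ [_ [H10 [_ H12]]]]]]]]]].
have hh := H10 e i (or_intror he).
have [i' [j' [s [dw vin]]]] := H12 (tail e).
have [a _ _ _] := dwalk_mono dw vin.
move: hh.2; rewrite he -(H5 i' i) => lt.
by have := lt_le_trans lt a; rewrite ltxx.
Qed.

Lemma no_out_snk (e : E) j : tail e <> snk G j.
Proof.
move=> te.
case: HG => _ [_ [_ [_ [_ [_ [H7 [_ [_ [_ [H11 H12]]]]]]]]]].
have hh := H11 e j (or_introl te).
have [i' [j' [s [dw vin]]]] := H12 (hd e).
have [_ _ _ d] := dwalk_mono dw vin.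
move: hh.2; rewrite te -(H7 j' j) => lt.
by have := lt_le_trans lt d; rewrite ltxx.
Qed.

Lemma dwalk_tail (u : V) (s : seq E) (w : V) (e : E) : dwalk u s w -> e \in s -> tail e \in walk_verts u s.
Proof.
elim: s u => [|f s IH] u //= [tf dw]; rewrite inE => /orP [/eqP ->|es].
  by rewrite tf /walk_verts mem_head.
by have := IH _ dw es; rewrite /walk_verts /= !inE => ->; rewrite orbT.
Qed.

Lemma dwalk_head (u : V) (s : seq E) (w : V) (e : E) : dwalk u s w -> e \in s -> hd e \in walk_verts u s.
Proof. by move=> _ es; rewrite /walk_verts inE map_f ?orbT. Qed.

Lemma dwalk_pot_head (u : V) (s : seq E) (w : V) (e : E) : dwalk u s w -> e \in s -> (pot u < pot (hd e))%R.
Proof.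
elim: s u => [|f s IH] u //= [tf dw]; rewrite inE => /orP [/eqP ->|es].
  by rewrite -tf pot_edge.
apply: lt_trans (IH _ dw es); by rewrite -tf pot_edge.
Qed.

Lemma dwalk_pot_tail (u : V) (s : seq E) (w : V) (e : E) : dwalk u s w -> e \in s -> (pot u <= pot (tail e))%R.
Proof.
elim: s u => [|f s IH] u //= [tf dw]; rewrite inE => /orP [/eqP ->|es].
  by rewrite tf.
apply: le_trans (IH _ dw es); rewrite -tf; exact: ltW (pot_edge f).
Qed.

Lemma dwalk_head_uniq (u : V) (s : seq E) (w : V) (e f : E) : dwalk u s w -> e \in s -> f \in s -> hd e = hd f -> e = f.
Proof.
elim: s u => [|g s IH] u //= [tg dw]; rewrite !inE => /orP [/eqP ->|es] /orP [/eqP ->|fs] hh //.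
- by have := dwalk_pot_head dw fs; rewrite -hh ltxx.
- by have := dwalk_pot_head dw es; rewrite hh ltxx.
- exact: IH dw es fs hh.
Qed.

Lemma dwalk_tail_uniq (u : V) (s : seq E) (w : V) (e f : E) : dwalk u s w -> e \in s -> f \in s -> tail e = tail f -> e = f.
Proof.
elim: s u => [|g s IH] u //= [tg dw]; rewrite !inE => /orP [/eqP ->|es] /orP [/eqP ->|fs] hh //.
- by have := dwalk_pot_tail dw fs; rewrite -hh => /(lt_le_trans (pot_edge g)); rewrite ltxx.
- by have := dwalk_pot_tail dw es; rewrite hh => /(lt_le_trans (pot_edge g)); rewrite ltxx.
- exact: IH dw es fs hh.
Qed.

Lemma dwalk_head_next (u : V) (s : seq E) (w : V) (e : E) : dwalk u s w -> e \in s ->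
  hd e = w \/ exists2 f, f \in s & tail f = hd e.
Proof.
elim: s u => [|g s IH] u //= [tg dw]; rewrite inE => /orP [/eqP ->|es].
  case: s dw {IH} => [|f s] /= dw; first by left.
  by right; exists f; [rewrite !inE eqxx orbT|case: dw].
case: (IH _ dw es) => [->|[f fs tf]]; first by left.
by right; exists f => //; rewrite inE fs orbT.
Qed.

Lemma dwalk_nil_or (u : V) (s : seq E) (w : V) : dwalk u s w -> u <> w -> exists2 e, e \in s & tail e = u.
Proof. case: s => [|e s] /=; first by move=> ->. by move=> [te _] _; exists e; rewrite ?mem_head. Qed.

Lemma dwalk_last (u : V) (s : seq E) (w : V) : dwalk u s w -> u <> w -> exists2 e, e \in s & hd e = w.
Proof.
elim: s u => [|g s IH] u //= [tg dw] neq.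
case: (eqVneq (hd g) w) => [hw|hw]; first by exists g; rewrite ?mem_head.
have [e es he] := IH _ dw (elimN eqP hw).
by exists e; rewrite // inE es orbT.
Qed.


Definition ins (F : {set E}) (v : V) : {set E} := [set e in F | hd e == v].
Definition outs (F : {set E}) (v : V) : {set E} := [set e in F | tail e == v].

Lemma card_le1 (T : finType) (A : {set T}) :
  (forall x y, x \in A -> y \in A -> x = y) -> (#|A| <= 1)%N.
Proof. by move=> h; apply/card_le1_eqP => x y xA yA; exact: h. Qed.

Lemma card_mem1 (T : finType) (A : {set T}) x : (#|A| <= 1)%N -> x \in A -> #|A| = 1%N.
Proof.
move=> le xA; apply/eqP; rewrite eqn_leq le /=; apply/card_gt0P; by exists x.
Qed.

Lemma card_nomem (T : finType) (A : {set T}) : (forall x, x \notin A) -> #|A| = 0%N.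
Proof.
move=> h; apply/eqP; rewrite cards_eq0; apply/eqP/setP => x; by rewrite inE (negbTE (h x)).
Qed.

Section Flow.
Variables (I : {set 'I_m}) (J : {set 'I_n}) (p : 'I_m -> seq E) (t : 'I_m -> 'I_n).
Hypothesis HF : is_flow I J p t.
Local Notation Ep := (flow_edges I p).

Lemma memEp e : e \in Ep <-> exists2 i, i \in I & e \in p i.
Proof.
rewrite /flow_edges; split.
  by move/bigcupP => [i iI]; rewrite inE => ein; exists i.
by move=> [i iI ein]; apply/bigcupP; exists i; rewrite ?inE.
Qed.

Lemma Ep_head_uniq e f : e \in Ep -> f \in Ep -> hd e = hd f -> e = f.
Proof.
case: HF => _ H2 H3 _.
move=> /memEp [i iI ei] /memEp [i' iI' fi'] hh.
case: (eqVneq i i') => [eq|neq].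
  subst i'; exact: dwalk_head_uniq (H2 _ iI) ei fi' hh.
have := H3 _ _ iI iI' (elimN eqP neq) _ (dwalk_head (H2 _ iI) ei).
by rewrite hh (dwalk_head (H2 _ iI') fi').
Qed.

Lemma Ep_tail_uniq e f : e \in Ep -> f \in Ep -> tail e = tail f -> e = f.
Proof.
case: HF => _ H2 H3 _.
move=> /memEp [i iI ei] /memEp [i' iI' fi'] hh.
case: (eqVneq i i') => [eq|neq].
  subst i'; exact: dwalk_tail_uniq (H2 _ iI) ei fi' hh.
have := H3 _ _ iI iI' (elimN eqP neq) _ (dwalk_tail (H2 _ iI) ei).
by rewrite hh (dwalk_tail (H2 _ iI') fi').
Qed.

Lemma ins_le1 v : (#|ins Ep v| <= 1)%N.
Proof.
apply: card_le1 => x y; rewrite !inE => /andP [xE /eqP xv] /andP [yE /eqP yv].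
by apply: Ep_head_uniq; rewrite // xv yv.
Qed.

Lemma outs_le1 v : (#|outs Ep v| <= 1)%N.
Proof.
apply: card_le1 => x y; rewrite !inE => /andP [xE /eqP xv] /andP [yE /eqP yv].
by apply: Ep_tail_uniq; rewrite // xv yv.
Qed.

Lemma ins_src i F : #|ins F (src G i)| = 0%N.
Proof. by apply: card_nomem => e; rewrite inE; apply/negP => /andP [_ /eqP /no_in_src]. Qed.

Lemma outs_snk j F : #|outs F (snk G j)| = 0%N.
Proof. by apply: card_nomem => e; rewrite inE; apply/negP => /andP [_ /eqP /no_out_snk]. Qed.

Lemma outs_src i : #|outs Ep (src G i)| = (i \in I).
Proof.
case: HF => _ H2 H3 _.
case iI: (i \in I).
  have [e ei te] := dwalk_nil_or (H2 _ iI) (@src_snk _ _).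
  apply: (card_mem1 (x := e) (outs_le1 _)); rewrite inE te eqxx andbT.
  by apply/memEp; exists i.
apply: card_nomem => f; rewrite inE; apply/negP => /andP [/memEp [i' iI' fi'] /eqP tf].
have := dwalk_tail (H2 _ iI') fi'; rewrite /walk_verts inE tf => /orP [/eqP /src_inj ii'|].
  by move: iI; rewrite ii' iI'.
by move/mapP => [g _ /esym /no_in_src].
Qed.

Lemma ins_snk j : #|ins Ep (snk G j)| = (j \in J).
Proof.
case: HF => _ H2 H3 HJ.
case jJ: (j \in J).
  move: jJ; rewrite -HJ => /imsetP [i iI ->].
  have [e ei he] := dwalk_last (H2 _ iI) (@src_snk _ _).
  apply: (card_mem1 (x := e) (ins_le1 _)); rewrite inE he eqxx andbT.
  by apply/memEp; exists i.
apply: card_nomem => f; rewrite inE; apply/negP => /andP [/memEp [i' iI' fi'] /eqP hf].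
case: (dwalk_head_next (H2 _ iI') fi') => [|[g _]].
  rewrite hf => /snk_inj jt; move: jJ; rewrite -HJ jt.
  by rewrite (imset_f t iI').
by rewrite hf => /no_out_snk.
Qed.

Lemma ins_outs v : (forall i, v <> src G i) -> (forall j, v <> snk G j) ->
  #|ins Ep v| = #|outs Ep v|.
Proof.
case: HF => _ H2 H3 HJ => ns nt.
have [e|] := set_0Vmem (ins Ep v).
  have [f|] := set_0Vmem (outs Ep v); first by rewrite e f.
  move=> [f]; rewrite inE => /andP [/memEp [i iI fi] /eqP tf].
  have := dwalk_tail (H2 _ iI) fi; rewrite /walk_verts inE tf => /orP [/eqP /ns //|].
  move/mapP => [g gi hg].
  have : g \in ins Ep v by rewrite inE hg eqxx andbT; apply/memEp; exists i.
  by rewrite e inE.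
move=> [e]; rewrite inE => /andP [/memEp [i iI ei] /eqP he].
case: (dwalk_head_next (H2 _ iI) ei) => [|[f fi tf]]; first by rewrite he => /nt.
have fo : f \in outs Ep v by rewrite inE tf he eqxx andbT; apply/memEp; exists i.
rewrite (card_mem1 (outs_le1 _) fo) (card_mem1 (ins_le1 _) (x := e)) //.
by rewrite inE he eqxx andbT; apply/memEp; exists i.
Qed.

End Flow.

Lemma memU (A B : {set E}) e : (e \in symdiff A B) = (e \in A) (+) (e \in B).
Proof. by rewrite /symdiff !inE; case: (e \in A); case: (e \in B). Qed.

Lemma symdiffC (A B : {set E}) : symdiff A B = symdiff B A.
Proof. by apply/setP => e; rewrite !memU addbC. Qed.

Lemma ins_symdiff (A B : {set E}) v : ins (symdiff A B) v = symdiff (ins A v) (ins B v).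
Proof. by apply/setP => e; rewrite /ins /symdiff !inE; case: (e \in A); case: (e \in B); case: (hd e == v). Qed.

Lemma outs_symdiff (A B : {set E}) v : outs (symdiff A B) v = symdiff (outs A v) (outs B v).
Proof. by apply/setP => e; rewrite /outs /symdiff !inE; case: (e \in A); case: (e \in B); case: (tail e == v). Qed.

Lemma card_symdiff (X Y : {set E}) : (#|symdiff X Y| + 2 * #|X :&: Y| = #|X| + #|Y|)%N.
Proof.
have h1 := cardsID Y X; have h2 := cardsID X Y.
have h3 := cardsUI (X :\: Y) (Y :\: X).
have e0 : (X :\: Y) :&: (Y :\: X) = set0.
  by apply/setP => e; rewrite !inE; case: (e \in X); case: (e \in Y).
rewrite e0 cards0 addn0 in h3; rewrite /symdiff h3.
rewrite setIC in h2. lia.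
Qed.

Lemma odd_symdiff (X Y : {set E}) : odd #|symdiff X Y| = odd #|X| (+) odd #|Y|.
Proof.
have := card_symdiff X Y => /(congr1 odd); rewrite !oddD => <-.
by case: (odd #|X :&: Y|); case: (odd #|symdiff X Y|).
Qed.

Lemma le_symdiff (X Y : {set E}) : (#|symdiff X Y| <= #|X| + #|Y|)%N.
Proof. have := card_symdiff X Y; lia. Qed.

Definition ndegf (a c : nat) (b : bool) : nat :=
  ((if b == (c + a == 4)%N then c else 0) + (if b then 0 else a))%N.

Lemma node_eq (U : {set E}) w v b c : (node U w c == (v, b)) =
  (w == v) && (if c then b == (degU U v == 4%N) else ~~ b).
Proof.
rewrite /node; case: (eqVneq w v) => [->|ne].
  by case: (degU U v == 4%N); case: b; case: c; rewrite ?xpair_eqE ?eqxx.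
by case: (degU U w == 4%N); rewrite xpair_eqE (negbTE ne).
Qed.

Lemma ndegE U v b : ndeg U (v, b) = ndegf #|ins U v| #|outs U v| b.
Proof.
rewrite /ndeg /ndegf /ends /=.
have -> : [set e in U | node U (tail e) true == (v, b)] =
          if b == (degU U v == 4%N) then outs U v else set0.
  apply/setP => e; rewrite [in LHS]inE node_eq.
  by case: (b == _); rewrite !inE ?andbT ?andbF.
have -> : [set e in U | node U (hd e) false == (v, b)] = if b then set0 else ins U v.
  apply/setP => e; rewrite [in LHS]inE node_eq.
  by case: b; rewrite !inE ?andbT ?andbF.
have -> : degU U v = (#|outs U v| + #|ins U v|)%N by [].
by case: (b == _); case: b; rewrite ?cards0.
Qed.

Lemma ndegf_gen a c b : (a <= 2)%N -> (c <= 2)%N -> odd a = odd c ->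
  (ndegf a c b <= 2)%N /\ ndegf a c b <> 1%N.
Proof. by rewrite /ndegf; case: a => [|[|[|a]]] //; case: c => [|[|[|c]]] //; case: b. Qed.

Lemma ndegf_src c b : (c <= 2)%N -> (ndegf 0 c b <= 2)%N /\ (ndegf 0 c b == 1%N) = ~~ b && odd c.
Proof. by rewrite /ndegf; case: c => [|[|[|c]]] //; case: b. Qed.

Lemma ndegf_snk a b : (a <= 2)%N -> (ndegf a 0 b <= 2)%N /\ (ndegf a 0 b == 1%N) = ~~ b && odd a.
Proof. by rewrite /ndegf; case: a => [|[|[|a]]] //; case: b. Qed.

Lemma two_le_card (A : {set E}) x y : x \in A -> y \in A -> x != y -> (2 <= #|A|)%N.
Proof.
move=> xA yA ne; have <- : #|[set x; y]| = 2%N by rewrite cards2 ne.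
by apply: subset_leq_card; apply/subsetP => z; rewrite !inE => /orP [/eqP ->|/eqP ->].
Qed.

Section Double.
Variables (I I' : {set 'I_m}) (J J' : {set 'I_n}) (p p' : 'I_m -> seq E) (t t' : 'I_m -> 'I_n).
Hypothesis HF : is_flow I J p t.
Hypothesis HF' : is_flow I' J' p' t'.
Local Notation A := (flow_edges I p).
Local Notation B := (flow_edges I' p').
Local Notation U := (symdiff A B).

Lemma ins_le2 v : (#|ins U v| <= 2)%N.
Proof.
rewrite ins_symdiff; apply: leq_trans (le_symdiff _ _) _.
by rewrite -[2%N]/(1 + 1)%N leq_add // (ins_le1 HF, ins_le1 HF').
Qed.

Lemma outs_le2 v : (#|outs U v| <= 2)%N.
Proof.
rewrite outs_symdiff; apply: leq_trans (le_symdiff _ _) _.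
by rewrite -[2%N]/(1 + 1)%N leq_add // (outs_le1 HF, outs_le1 HF').
Qed.

Definition Tset := Rset G ((I :\: I') :|: (I' :\: I)) :|: Cset G ((J :\: J') :|: (J' :\: J)).

Lemma odd_b (b : bool) : odd b = b. Proof. by case: b. Qed.

Lemma src_Tset i : (src G i \in Tset) = (i \in I) (+) (i \in I').
Proof.
rewrite /Tset /Rset /Cset inE mem_imset; last exact: src_inj.
have -> : (src G i \in [set snk G j | j in (J :\: J') :|: (J' :\: J)]) = false.
  by apply/negP => /imsetP [j _ /src_snk].
by rewrite orbF !inE; case: (i \in I); case: (i \in I').
Qed.

Lemma snk_Tset j : (snk G j \in Tset) = (j \in J) (+) (j \in J').
Proof.
rewrite /Tset /Rset /Cset inE [X in _ || X]mem_imset; last exact: snk_inj.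
have -> : (snk G j \in [set src G i | i in (I :\: I') :|: (I' :\: I)]) = false.
  by apply/negP => /imsetP [i _ /esym /src_snk].
by rewrite !inE; case: (j \in J); case: (j \in J').
Qed.

Lemma ndeg_spec v b : (ndeg U (v, b) <= 2)%N /\ (ndeg U (v, b) == 1%N) = ~~ b && (v \in Tset).
Proof.
rewrite ndegE.
case: (boolP [exists i, v == src G i]) => [/existsP [i /eqP ->]|ns].
  rewrite ins_src; have [h1 h2] := ndegf_src b (outs_le2 (src G i)).
  by split => //; rewrite h2 outs_symdiff odd_symdiff (outs_src HF) (outs_src HF') !odd_b src_Tset.
case: (boolP [exists j, v == snk G j]) => [/existsP [j /eqP ->]|nt].
  rewrite outs_snk; have [h1 h2] := ndegf_snk b (ins_le2 (snk G j)).
  by split => //; rewrite h2 ins_symdiff odd_symdiff (ins_snk HF) (ins_snk HF') !odd_b snk_Tset.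
have ns' : forall i, v <> src G i.
  by move=> i vi; move/negP: ns; apply; apply/existsP; exists i; rewrite vi.
have nt' : forall j, v <> snk G j.
  by move=> j vj; move/negP: nt; apply; apply/existsP; exists j; rewrite vj.
have hodd : odd #|ins U v| = odd #|outs U v|.
  by rewrite ins_symdiff outs_symdiff !odd_symdiff (ins_outs HF ns' nt') (ins_outs HF' ns' nt').
have [h1 h2] := ndegf_gen b (ins_le2 v) (outs_le2 v) hodd.
split => //; rewrite (negbTE (introN eqP h2)).
have -> : (v \in Tset) = false.
  apply/negP; rewrite /Tset /Rset /Cset inE => /orP [/imsetP [i _ /ns'] //|/imsetP [j _ /nt'] //].
by rewrite andbF.
Qed.

Lemma same_head e f : e \in U -> f \in U -> e != f -> hd e = hd f -> (e \in A) != (f \in A).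
Proof.
rewrite !memU => eU fU ne hh.
case eA: (e \in A); case fA: (f \in A) => //=.
  by case/negP: ne; apply/eqP; apply: (Ep_head_uniq HF).
move: eU fU; rewrite eA fA /= => eB fB.
by case/negP: ne; apply/eqP; apply: (Ep_head_uniq HF').
Qed.

Lemma same_tail e f : e \in U -> f \in U -> e != f -> tail e = tail f -> (e \in A) != (f \in A).
Proof.
rewrite !memU => eU fU ne hh.
case eA: (e \in A); case fA: (f \in A) => //=.
  by case/negP: ne; apply/eqP; apply: (Ep_tail_uniq HF).
move: eU fU; rewrite eA fA /= => eB fB.
by case/negP: ne; apply/eqP; apply: (Ep_tail_uniq HF').
Qed.

Lemma diff_core e f : e \in U -> f \in U -> hd e = tail f -> degU U (tail f) != 4%N ->
  e \in A -> f \notin A -> False.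
Proof.
rewrite !memU => eU fU hv d4 eA fA.
move: eU fU; rewrite eA (negbTE fA) /= => eB fB.
set v := tail f in hv d4.
have ns : forall i, v <> src G i by move=> i; rewrite -hv; exact: no_in_src.
have nt : forall j, v <> snk G j by move=> j; exact: no_out_snk.
have eI : e \in ins A v by rewrite inE eA hv eqxx.
have : (0 < #|outs A v|)%N by rewrite -(ins_outs HF ns nt); apply/card_gt0P; exists e.
move/card_gt0P => [b]; rewrite inE => /andP [bA /eqP tb].
have bf : b != f by apply/eqP => bf; move: fA; rewrite -bf bA.
have bB : b \notin B.
  by apply/negP => bB; move/negP: bf; apply; apply/eqP; apply: (Ep_tail_uniq HF').
have fO : f \in outs B v by rewrite inE fB eqxx.
have : (0 < #|ins B v|)%N by rewrite (ins_outs HF' ns nt); apply/card_gt0P; exists f.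
move/card_gt0P => [a]; rewrite inE => /andP [aB /eqP ha].
have ae : a != e by apply/eqP => ae; move: eB; rewrite -ae aB.
have aA : a \notin A.
  by apply/negP => aA; move/negP: ae; apply; apply/eqP; apply: (Ep_head_uniq HF) => //; rewrite ha hv.
have o2 : (2 <= #|outs U v|)%N.
  apply: (two_le_card (x := b) (y := f)) => //; rewrite inE memU.
    by rewrite bA (negbTE bB) tb eqxx.
  by rewrite (negbTE fA) fB eqxx.
have i2 : (2 <= #|ins U v|)%N.
  apply: (two_le_card (x := e) (y := a)); rewrite ?inE ?memU.
  - by rewrite eA (negbTE eB) hv eqxx.
  - by rewrite (negbTE aA) aB ha eqxx.
  - by rewrite eq_sym.
have eo : #|outs U v| = 2%N by apply/eqP; rewrite eqn_leq o2 outs_le2.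
have ei : #|ins U v| = 2%N by apply/eqP; rewrite eqn_leq i2 ins_le2.
by move: d4; rewrite /degU -/(outs U v) -/(ins U v) eo ei.
Qed.

End Double.
End Graph.

Lemma diff_side R m n (G : sedata R m n) (HG : is_SEgraph G)
  (I I' : {set 'I_m}) (J J' : {set 'I_n}) (p p' : 'I_m -> seq (edge G)) (t t' : 'I_m -> 'I_n)
  (HF : is_flow I J p t) (HF' : is_flow I' J' p' t') e f :
  let U := symdiff (flow_edges I p) (flow_edges I' p') in
  e \in U -> f \in U -> Defs.head e = tail f -> degU U (tail f) != 4%N ->
  (e \in flow_edges I p) = (f \in flow_edges I p).
Proof.
move=> U eU fU hv d4.
case eA: (e \in flow_edges I p); case fA: (f \in flow_edges I p) => //.
  by case: (diff_core HG HF HF' eU fU hv d4 eA); rewrite fA.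
move: (eU) (fU); rewrite /U !memU eA fA /= => eB fB.
have eU' : e \in symdiff (flow_edges I' p') (flow_edges I p) by rewrite symdiffC.
have fU' : f \in symdiff (flow_edges I' p') (flow_edges I p) by rewrite symdiffC.
have d4' : degU (symdiff (flow_edges I' p') (flow_edges I p)) (tail f) != 4%N by rewrite symdiffC.
have [] := diff_core HG HF' HF eU' fU' hv d4' eB.
by move: fU; rewrite /U memU fA.
Qed.


Section Walks.
Variables (R : realFieldType) (m n : nat) (G : sedata R m n).
Local Notation V := (vert G).
Local Notation E := (edge G).
Local Notation N := (V * bool)%type.
Variable U : {set E}.

Definition w (x : N) (e : E) : nat := (((ends U e).1 == x) + ((ends U e).2 == x))%N.
Definition cnt (x : N) (s : seq (E * bool)) : nat := \sum_(ed <- s) w x ed.1.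

Lemma sum_bool_card (T : finType) (A : {pred T}) (P : pred T) :
  \sum_(x in A) (P x : nat) = #|[set x in A | P x]|.
Proof.
rewrite -sum1dep_card big_mkcondr /=; apply: eq_bigr => x _; by case: (P x).
Qed.

Lemma ndeg_sum x : ndeg U x = \sum_(e in U) w x e.
Proof. by rewrite /ndeg big_split /= !sum_bool_card. Qed.

Lemma parity x s y z : uwalk U x s y -> odd (cnt z s) = (x == z) (+) (y == z).
Proof.
elim: s x => [|[e d] s IH] x /=.
  by move=> ->; rewrite /cnt big_nil; case: (y == z).
move=> [eU hx wk]; rewrite /cnt big_cons -/(cnt z s) oddD (IH _ wk) /w oddD !odd_b /=.
case: d hx wk => hx wk; rewrite -hx;
  by case: ((ends U e).1 == z); case: ((ends U e).2 == z); case: (y == z).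
Qed.

Lemma walk_inU x s y : uwalk U x s y -> forall ed, ed \in s -> ed.1 \in U.
Proof.
elim: s x => [|[e d] s IH] x //= [eU hx wk] ed; rewrite inE => /orP [/eqP -> //|].
exact: IH wk ed.
Qed.

Lemma cnt_map z s : cnt z s = \sum_(e <- map fst s) w z e.
Proof. by rewrite /cnt big_map. Qed.

Lemma cnt_split x s y z : uwalk U x s y -> uniq (map fst s) ->
  ndeg U z = (cnt z s + \sum_(e in U | e \notin map fst s) w z e)%N.
Proof.
move=> wk us; rewrite ndeg_sum (bigID (fun e => e \in map fst s)) /=; congr (_ + _)%N.
rewrite cnt_map big_uniq //; apply: eq_bigl => e.
case es: (e \in map fst s); rewrite ?andbT ?andbF //.
by move/mapP: es => [ed eds ->]; exact: walk_inU wk _ eds.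
Qed.

Lemma cnt_le x s y z : uwalk U x s y -> uniq (map fst s) -> (cnt z s <= ndeg U z)%N.
Proof. by move=> wk us; rewrite (cnt_split z wk us) leq_addr. Qed.

Lemma rest_pos x s y z : uwalk U x s y -> uniq (map fst s) -> (cnt z s < ndeg U z)%N ->
  exists e, [/\ e \in U, e \notin map fst s & (0 < w z e)%N].
Proof.
move=> wk us; rewrite (cnt_split z wk us) -{1}[cnt z s]addn0 ltn_add2l.
case: (boolP [exists e, [&& e \in U, e \notin map fst s & (0 < w z e)%N]]).
  by move/existsP => [e /and3P [? ? ?]]; exists e.
move=> ne; rewrite big1 // => e /andP [eU es].
apply/eqP; rewrite -leqn0 leqNgt; apply/negP => pos.
by move/negP: ne; apply; apply/existsP; exists e; rewrite eU es pos.
Qed.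

Lemma rest_zero x s y z : uwalk U x s y -> uniq (map fst s) -> (ndeg U z <= cnt z s)%N ->
  forall e, e \in U -> (0 < w z e)%N -> e \in map fst s.
Proof.
move=> wk us le e eU pos; apply/negPn/negP => es.
move: le; rewrite (cnt_split z wk us) (bigD1 e) /=; last by rewrite eU es.
move: pos; lia.
Qed.

Lemma cnt_pos z s : (0 < cnt z s)%N = has (fun ed => 0 < w z ed.1)%N s.
Proof. by elim: s => [|ed s IH]; rewrite /cnt ?big_nil ?big_cons // addn_gt0 -/(cnt z s) IH. Qed.

Lemma cnt_ge z s ed : ed \in s -> (w z ed.1 <= cnt z s)%N.
Proof.
elim: s => [|ed' s IH] //; rewrite inE /cnt big_cons -/(cnt z s) => /orP [/eqP ->|es].
  exact: leq_addr.
by apply: leq_trans (IH es) _; exact: leq_addl.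
Qed.

Lemma cnt_first x s y : uwalk U x s y -> s != [::] -> (0 < cnt x s)%N.
Proof.
case: s => [|[e d] s] //= [eU hx wk] _; rewrite /cnt big_cons /w /=.
by case: d hx wk => <- _; rewrite eqxx /= ?addn_gt0 ?orbT.
Qed.

Lemma uwalk_rcons x s y e d : uwalk U x s y -> e \in U ->
  (if d then (ends U e).1 else (ends U e).2) = y ->
  uwalk U x (rcons s (e, d)) (if d then (ends U e).2 else (ends U e).1).
Proof.
elim: s x => [|[f d'] s IH] x /=; first by move=> ->.
by move=> [fU hx wk] eU hy; split => //; exact: IH.
Qed.

Hypothesis Hdeg : forall x, (ndeg U x <= 2)%N.

Lemma trav_neq x s y : exch_trav U x s y -> x != y.
Proof.
case=> wk ns us dx dy; apply/eqP => exy.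
have := parity x wk; rewrite exy eqxx /= => ev.
have := cnt_first wk ns; have := cnt_le y wk us; rewrite -exy dx.
move: ev; rewrite -exy; case: (cnt x s) => [|[|k]] //.
Qed.

Lemma size_lt x s y e : uwalk U x s y -> uniq (map fst s) -> e \in U -> e \notin map fst s ->
  (size s < #|U|)%N.
Proof.
move=> wk us eU es; rewrite cardE -(size_map fst) -/(size (e :: _)).
apply: uniq_leq_size; first by rewrite /= es us.
move=> f; rewrite inE => /orP [/eqP ->|/mapP [ed eds ->]]; rewrite mem_enum //.
exact: walk_inU wk _ eds.
Qed.

Lemma ext_step x s y : uwalk U x s y -> uniq (map fst s) -> ndeg U x = 1%N ->
  ~~ ((s != [::]) && (ndeg U y == 1%N)) ->
  exists e d, [/\ e \in U, e \notin map fst s & (if d then (ends U e).1 else (ends U e).2) = y].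
Proof.
move=> wk us dx nd.
have lt : (cnt y s < ndeg U y)%N.
  case: s wk us nd => [|ed s] wk us nd.
    by move: wk => /= <-; rewrite dx /cnt big_nil.
  move: nd; rewrite /= => /negP ny.
  have xy : x != y by apply/eqP => exy; apply: ny; rewrite -exy dx.
  have := parity y wk; rewrite eqxx (negbTE xy) /= => od.
  have := cnt_le y wk us; have := Hdeg y.
  move: od ny; case: (cnt y (ed :: s)) => [|[|[|k]]] //=; case: (ndeg U y) => [|[|[|j]]] //.
have [e [eU es pos]] := rest_pos wk us lt.
exists e, ((ends U e).1 == y); split => //.
move: pos; rewrite /w; case: eqP => // _; case: eqP => //.
Qed.

Lemma trav_exists x : ndeg U x = 1%N -> exists s y, exch_trav U x s y.
Proof.
move=> dx.
suff : forall k s y, uwalk U x s y -> uniq (map fst s) -> (#|U| - size s <= k)%N ->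
  exists s' y', exch_trav U x s' y'.
  by move=> h; apply: (h #|U| [::] x) => //=; rewrite subn0.
elim=> [|k IH] s y wk us le;
  (case: (boolP ((s != [::]) && (ndeg U y == 1%N))) => [/andP [ns /eqP dy]|nd];
    first by exists s, y; split).
  have [e [d [eU es _]]] := ext_step wk us dx nd.
  have := size_lt wk us eU es; lia.
have [e [d [eU es hy]]] := ext_step wk us dx nd.
have := size_lt wk us eU es => lt.
apply: (IH (rcons s (e, d)) _ (uwalk_rcons wk eU hy)).
  by rewrite map_rcons rcons_uniq es us.
rewrite size_rcons; lia.
Qed.

Lemma trav_touch x s y z : exch_trav U x s y -> (0 < cnt z s)%N -> (ndeg U z <= cnt z s)%N.
Proof.
move=> tr; have xy := trav_neq tr; case: tr => wk ns us dx dy pos.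
have := parity z wk; move: pos.
case: (eqVneq x z) => [<-|xz]; first by rewrite dx.
case: (eqVneq y z) => [<-|yz]; first by rewrite dy.
move=> pos od; have := Hdeg z; move: od pos.
by case: (cnt z s) => [|[|k]] //= _ _ h; apply: leq_trans h _.
Qed.

Lemma trav_closed x s y : exch_trav U x s y -> forall z e f,
  e \in map fst s -> f \in U -> (0 < w z e)%N -> (0 < w z f)%N -> f \in map fst s.
Proof.
move=> tr z e f /mapP [ed eds ->] fU pe pf.
have pos : (0 < cnt z s)%N := leq_trans pe (cnt_ge z eds).
have tr' := tr; case: tr' => wk _ us _ _.
exact: rest_zero wk us (trav_touch tr pos) _ fU pf.
Qed.

Lemma walk_component (S : seq E) x s y :
  uwalk U x s y ->
  (forall z e f, e \in S -> f \in U -> (0 < w z e)%N -> (0 < w z f)%N -> f \in S) ->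
  has (fun ed => ed.1 \in S) s -> forall ed, ed \in s -> ed.1 \in S.
Proof.
move=> + cl; elim: s x => [|[e d] s IH] x //= [eU hx wk] hs.
have pe : (0 < w (if d then (ends U e).2 else (ends U e).1) e)%N.
  by rewrite /w; case: d {hx wk} => /=; rewrite eqxx ?addn_gt0 ?orbT.
set x' := (if d then (ends U e).2 else (ends U e).1) in wk pe.
case: s IH wk hs => [|[f d'] s] IH wk hs.
  by move: hs; rewrite /= orbF => eS ed; rewrite inE => /eqP ->.
have pf : (0 < w x' f)%N.
  by move: wk => /= [_ hf _]; rewrite /w -hf; case: d' {hf IH hs} => /=; rewrite eqxx ?addn_gt0 ?orbT.
have fU : f \in U by case: wk.
case eS: (e \in S).
  have fS : f \in S := cl _ _ _ eS fU pe pf.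
  have all' : forall ed, ed \in (f, d') :: s -> ed.1 \in S by apply: IH wk _; rewrite /= fS.
  by move=> ed; rewrite inE => /orP [/eqP ->|]; [exact: eS|exact: all'].
move: hs; rewrite /= eS /= => hs.
have all' := IH _ wk hs.
have fS : f \in S by exact: (all' (f, d') (mem_head _ _)).
by rewrite (cl _ _ _ fS eU pf pe) in eS.
Qed.

End Walks.


Lemma exists_list (T : finType) (Q : T -> Prop) :
  exists s : seq T, uniq s /\ forall x, x \in s <-> Q x.
Proof.
suff : forall l : seq T, exists s : seq T, uniq s /\ forall x, x \in s <-> (x \in l /\ Q x).
  move=> /(_ (enum T)) [s [us hs]]; exists s; split => // x; rewrite hs mem_enum; split; [by case|by move=> q; split].
elim=> [|a l [s [us hs]]]; first by exists [::]; split => // x; rewrite !in_nil; split => // [[]].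
case: (classic (Q a)) => qa.
  case ain: (a \in s).
    exists s; split => // x; rewrite hs inE; split.
      by move=> [xl qx]; rewrite xl orbT.
    move=> [/orP [/eqP ->|xl] qx]; last by [].
    by case: (hs a) => /(_ ain).
  exists (a :: s); split; first by rewrite /= ain.
  move=> x; rewrite !inE; split.
    by move=> /orP [/eqP ->|/hs [xl qx]]; [rewrite eqxx|rewrite xl orbT].
  move=> [/orP [/eqP ->|xl] qx]; first by rewrite eqxx.
  by apply/orP; right; apply/hs.
exists s; split => // x; rewrite hs inE; split; first by move=> [xl qx]; rewrite xl orbT.
by move=> [/orP [/eqP xa|xl] qx]; [subst x|].
Qed.

Lemma conn_bool (a1 a2 a3 a4 b1 b2 b3 b4 Q : bool) :
  (a1 -> Q) -> (a2 -> ~~ Q) -> (a3 -> ~~ Q) -> (a4 -> Q) ->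
  (b1 -> ~~ Q) -> (b2 -> Q) -> (b3 -> Q) -> (b4 -> ~~ Q) ->
  [|| a1, a2, a3 | a4] -> [|| b1, b2, b3 | b4] ->
  [|| (a1 && b2) || (a2 && b1), (a3 && b4) || (a4 && b3), (a1 && b3) || (a3 && b1)
   | (a2 && b4) || (a4 && b2)].
Proof.
by case: Q; case: a1; case: a2; case: a3; case: a4; case: b1; case: b2; case: b3; case: b4;
  move=> //= h1 h2 h3 h4 h5 h6 h7 h8; rewrite ?h1 ?h2 ?h3 ?h4 ?h5 ?h6 ?h7 ?h8.
Qed.

Section Main.
Variables (R : realFieldType) (m n : nat) (G : sedata R m n).
Hypothesis HG : is_SEgraph G.
Local Notation V := (vert G).
Local Notation E := (edge G).
Local Notation hd := (@Defs.head R m n G).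
Variables (I I' : {set 'I_m}) (J J' : {set 'I_n}) (p p' : 'I_m -> seq E) (t t' : 'I_m -> 'I_n).
Hypothesis HF : is_flow I J p t.
Hypothesis HF' : is_flow I' J' p' t'.
Local Notation A := (flow_edges I p).
Local Notation B := (flow_edges I' p').
Local Notation U := (symdiff A B).
Local Notation T := (Tset G I I' J J').

Lemma Hdeg x : (ndeg U x <= 2)%N.
Proof. by case: x => v b; case: (ndeg_spec HG HF HF' v b). Qed.

Lemma N1 x : (ndeg U x == 1%N) = ~~ x.2 && (x.1 \in T).
Proof. by case: x => v b; case: (ndeg_spec HG HF HF' v b). Qed.

Definition ep (P : {set E}) : {set V * bool} :=
  [set z | (ndeg U z == 1%N) && [exists e in P, (0 < w U z e)%N]].

Lemma ex_cnt z s : [exists e in [set e in map fst s], (0 < w U z e)%N] = (0 < cnt U z s)%N.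
Proof.
rewrite cnt_pos; apply/existsP/hasP.
  by move=> [e /andP []]; rewrite inE => /mapP [ed eds ->] pos; exists ed.
by move=> [ed eds pos]; exists ed.1; rewrite inE map_f.
Qed.

Lemma ep_trav x s y : exch_trav U x s y -> ep [set e in map fst s] = [set x; y].
Proof.
move=> tr; have xy := trav_neq tr; have tr' := tr; case: tr' => wk ns us dx dy.
apply/setP => z; rewrite !inE ex_cnt.
apply/andP/orP.
  move=> [/eqP d1 pos].
  have := cnt_le z wk us; rewrite d1 => le.
  have c1 : cnt U z s = 1%N by apply/eqP; rewrite eqn_leq le pos.
  have := parity z wk; rewrite c1 /= => h.
  case zx: (z == x); first by left.
  case zy: (z == y); first by right.
  by move: h; rewrite eq_sym zx eq_sym zy.
have pos0 : forall u, odd (cnt U u s) -> (0 < cnt U u s)%N by move=> u; case: (cnt U u s).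
move=> [/eqP ->|/eqP ->]; split.
- by rewrite dx.
- by apply: pos0; rewrite (parity x wk) eqxx eq_sym (negbTE xy).
- by rewrite dy.
- by apply: pos0; rewrite (parity y wk) eqxx (negbTE xy).
Qed.

Lemma exch_ep P : exch_path U P -> #|ep P| = 2%N.
Proof.
move=> [x [s [y [tr ->]]]]; rewrite (ep_trav tr) cards2.
by rewrite (trav_neq tr).
Qed.

Lemma sub_path x s y x' s' y' : exch_trav U x s y -> exch_trav U x' s' y' ->
  (exists e, e \in map fst s /\ e \in map fst s') ->
  [set e in map fst s] \subset [set e in map fst s'].
Proof.
move=> tr tr' [e [es es']].
have tr0 := tr; case: tr0 => wk _ _ _ _.
apply/subsetP => f; rewrite !inE => /mapP [ed eds ->].
apply: (walk_component wk _ _ eds).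
  move=> z e1 f1 e1s f1U p1 p2. have h := trav_closed Hdeg tr' (z := z) e1s f1U. exact: h p1 p2.
by move/mapP: es => [ed' eds' ee]; apply/hasP; exists ed'; rewrite -?ee.
Qed.

Lemma ep_unique P P' z : exch_path U P -> exch_path U P' -> z \in ep P -> z \in ep P' -> P = P'.
Proof.
move=> [x [s [y [tr ->]]]] [x' [s' [y' [tr' ->]]]].
rewrite !inE => /andP [_ /existsP [e /andP [es pe]]] /andP [_ /existsP [e' /andP [es' pe']]].
move: es es'; rewrite !inE => es es'.
have tr0 := tr; case: tr0 => wk _ _ _ _.
have eU : e \in U by move/mapP: es => [ed eds ->]; exact: walk_inU wk _ eds.
have es2 : e \in map fst s' := trav_closed Hdeg tr' es' eU pe' pe.
apply/eqP; rewrite eqEsubset; apply/andP; split.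
  by apply: sub_path tr tr' _; exists e.
by apply: sub_path tr' tr _; exists e.
Qed.

Lemma ep_exists z : ndeg U z = 1%N -> exists2 P, exch_path U P & z \in ep P.
Proof.
move=> dz; have [s [y tr]] := trav_exists Hdeg dz.
exists [set e in map fst s]; first by exists z, s, y.
by rewrite (ep_trav tr) !inE eqxx.
Qed.

Lemma sum_one (X : eqType) (r : seq X) (Q : pred X) x0 : uniq r -> x0 \in r -> Q x0 ->
  (forall x, x \in r -> Q x -> x = x0) -> (\sum_(x <- r) (Q x : nat) = 1)%N.
Proof.
move=> ur x0r qx0 h.
have -> : \sum_(x <- r) (Q x : nat) = count Q r.
  by elim: r {ur x0r h} => [|a r IH]; rewrite ?big_nil ?big_cons ?IH.
rewrite (@eq_in_count _ _ (pred1 x0)); first by rewrite count_uniq_mem // x0r.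
by move=> x xr /=; apply/idP/eqP => [|->] //; exact: h.
Qed.

Lemma card_sum (X : finType) (S : {set X}) : #|S| = \sum_(z : X) (z \in S : nat).
Proof. by rewrite -sum1_card big_mkcond /=; apply: eq_bigr => z _; case: (z \in S). Qed.

Lemma count_paths (Ps : seq {set E}) : uniq Ps -> (forall P, P \in Ps <-> exch_path U P) ->
  (2 * size Ps = #|[set z | ndeg U z == 1%N]|)%N.
Proof.
move=> uPs hPs.
have -> : (2 * size Ps = \sum_(P <- Ps) #|ep P|)%N.
  have : forall P, P \in Ps -> #|ep P| = 2%N by move=> P /hPs; exact: exch_ep.
  elim: Ps {uPs hPs} => [|P Ps IH] h; first by rewrite big_nil muln0.
  rewrite big_cons h ?mem_head // -IH; first by rewrite /= mulnS.
  by move=> Q QPs; apply: h; rewrite inE QPs orbT.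
rewrite (eq_bigr (fun P => \sum_(z : V * bool) (z \in ep P : nat))); last by move=> P _; exact: card_sum.
rewrite exchange_big /= card_sum; apply: eq_bigr => z _.
rewrite inE; case: (boolP (ndeg U z == 1%N)) => [/eqP dz|nz].
  have [P0 P0e zP0] := ep_exists dz.
  apply: (sum_one (x0 := P0)) => //; first by apply/hPs.
  by move=> P /hPs Pe zP; exact: (ep_unique Pe P0e zP zP0).
by rewrite big1_seq // => P _; rewrite inE (negbTE nz).
Qed.

Lemma cardN : #|[set z | ndeg U z == 1%N]| = #|T|.
Proof.
have inj : injective (fun v : V => (v, false)) by move=> a b [].
rewrite -(card_imset _ inj); apply: eq_card => -[v b].
rewrite inE N1 /=; apply/idP/imsetP.
  by move=> /andP [nb vT]; exists v => //; move: nb; case: b.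
by move=> [v' v'T [-> ->]].
Qed.

Lemma cardT : #|T| = (#|I :\: I'| + #|I' :\: I| + #|J :\: J'| + #|J' :\: J|)%N.
Proof.
have disjI : forall (X Y : {set 'I_m}), (X :\: Y) :&: (Y :\: X) = set0.
  by move=> X Y; apply/setP => i; rewrite !inE; case: (i \in X); case: (i \in Y).
have disjJ : forall (X Y : {set 'I_n}), (X :\: Y) :&: (Y :\: X) = set0.
  by move=> X Y; apply/setP => i; rewrite !inE; case: (i \in X); case: (i \in Y).
have hT := cardsUI (Rset G ((I :\: I') :|: (I' :\: I))) (Cset G ((J :\: J') :|: (J' :\: J))).
have e0 : Rset G ((I :\: I') :|: (I' :\: I)) :&: Cset G ((J :\: J') :|: (J' :\: J)) = set0.
  apply/setP => v; rewrite !inE; apply/negP => /andP [/imsetP [i _ ->] /imsetP [j _ /src_snk]].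
  by [].
rewrite e0 cards0 addn0 in hT.
rewrite /Tset hT /Rset /Cset !card_imset; [|exact: snk_inj|exact: src_inj].
have h1 := cardsUI (I :\: I') (I' :\: I); rewrite disjI cards0 addn0 in h1.
have h2 := cardsUI (J :\: J') (J' :\: J); rewrite disjJ cards0 addn0 in h2.
by rewrite h1 h2 !addnA.
Qed.

Lemma node_fst (u : V) c : (node U u c).1 = u.
Proof. by rewrite /node; case: ifP. Qed.

Lemma node_tf (a b : V) : node U a true = node U b false -> a = b /\ degU U a != 4%N.
Proof.
rewrite /node; case: ifP => da; case: ifP => db //; try by move=> [].
Qed.

Lemma node_eq1 (a b : V) c c' : node U a c = node U b c' -> a = b.
Proof. by move=> h; have := node_fst a c; rewrite h node_fst. Qed.

Definition q (ed : E * bool) := ed.2 == (ed.1 \in A).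

Lemma q_step e d f d' s x y : uwalk U x ((e, d) :: (f, d') :: s) y ->
  uniq (map fst ((e, d) :: (f, d') :: s)) -> q (e, d) = q (f, d').
Proof.
rewrite /= => -[eU hx [fU hf wk]] /andP [ef _].
have nef : e != f by apply/eqP => eq; move: ef; rewrite eq inE eqxx.
rewrite /q /=; move: hf; rewrite /ends /=.
case: d {hx wk}; case: d' => hf.
- have [tf d4] := node_tf hf.
  by rewrite (diff_side HG HF HF' eU fU (esym tf) (d4)).
- have hh := node_eq1 hf.
  have := same_head HG HF HF' eU fU nef (esym hh).
  by case: (e \in A); case: (f \in A).
- have tt := node_eq1 hf.
  have := same_tail HG HF HF' eU fU nef (esym tt).
  by case: (e \in A); case: (f \in A).
- have [tf d4] := node_tf (esym hf).
  by rewrite (diff_side HG HF HF' fU eU (esym tf) (d4)).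
Qed.

Lemma q_const ed0 s x y : uwalk U x (ed0 :: s) y -> uniq (map fst (ed0 :: s)) ->
  forall ed, ed \in ed0 :: s -> q ed = q ed0.
Proof.
elim: s ed0 x => [|ed1 s IH] ed0 x wk us ed.
  by rewrite inE => /eqP ->.
have h01 : q ed1 = q ed0.
  by case: ed0 wk us => e d; case: ed1 => f d' wk us; rewrite (q_step wk us).
have wk' : uwalk U (if ed0.2 then (ends U ed0.1).2 else (ends U ed0.1).1) (ed1 :: s) y.
  by case: ed0 wk {us h01} => e d /= [].
have us' : uniq (map fst (ed1 :: s)) by move: us => /= /andP [].
rewrite inE => /orP [/eqP -> //|eds].
by rewrite (IH _ _ wk' us' ed eds) h01.
Qed.

Lemma uwalk_last x s e d y : uwalk U x (rcons s (e, d)) y ->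
  e \in U /\ (if d then (ends U e).2 else (ends U e).1) = y.
Proof.
elim: s x => [|[f d'] s IH] x /=; first by move=> [].
by move=> [_ _ wk]; exact: IH wk.
Qed.

Lemma eA_src K (Kp : 'I_m -> seq E) (Kt : 'I_m -> 'I_n) (KJ : {set 'I_n}) e i :
  is_flow K KJ Kp Kt -> e \in flow_edges K Kp -> tail e = src G i -> i \in K.
Proof.
move=> HK eK te; have := outs_src HG HK i.
have : (0 < #|outs (flow_edges K Kp) (src G i)|)%N by apply/card_gt0P; exists e; rewrite inE eK te eqxx.
by move=> pos eq; move: pos; rewrite eq; case: (i \in K).
Qed.

Lemma eA_snk K (Kp : 'I_m -> seq E) (Kt : 'I_m -> 'I_n) (KJ : {set 'I_n}) e j :
  is_flow K KJ Kp Kt -> e \in flow_edges K Kp -> hd e = snk G j -> j \in KJ.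
Proof.
move=> HK eK he; have := ins_snk HG HK j.
have : (0 < #|ins (flow_edges K Kp) (snk G j)|)%N by apply/card_gt0P; exists e; rewrite inE eK he eqxx.
by move=> pos eq; move: pos; rewrite eq; case: (j \in KJ).
Qed.

Lemma src_edge e i : e \in U -> tail e = src G i ->
  (i \in I :\: I' -> e \in A) /\ (i \in I' :\: I -> e \notin A).
Proof.
rewrite memU => eU te; rewrite !inE.
case eA: (e \in A); case eB: (e \in B) => //=; move: eU; rewrite eA eB // => _.
  by rewrite (eA_src HF eA te); split => // /andP [].
by rewrite (eA_src HF' eB te); split => // /andP [].
Qed.

Lemma snk_edge e j : e \in U -> hd e = snk G j ->
  (j \in J :\: J' -> e \in A) /\ (j \in J' :\: J -> e \notin A).
Proof.
rewrite memU => eU te; rewrite !inE.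
case eA: (e \in A); case eB: (e \in B) => //=; move: eU; rewrite eA eB // => _.
  by rewrite (eA_snk HF eA te); split => // /andP [].
by rewrite (eA_snk HF' eB te); split => // /andP [].
Qed.

Lemma start_info x e d s y : exch_trav U x ((e, d) :: s) y ->
  [/\ x.1 \in Rset G (I :\: I') -> q (e, d), x.1 \in Rset G (I' :\: I) -> ~~ q (e, d),
      x.1 \in Cset G (J :\: J') -> ~~ q (e, d) & x.1 \in Cset G (J' :\: J) -> q (e, d)].
Proof.
case=> /= [[eU hx _]] _ _ _ _.
have hx1 : x.1 = if d then tail e else hd e by rewrite -hx; case: d {hx}; rewrite /ends /= node_fst.
rewrite /q /=.
split => /imsetP [k kK xk]; move: hx1; rewrite xk; case: d {hx} => /= h;
  try (by case: (no_in_src HG (esym h))); try (by case: (no_out_snk HG (esym h))).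
- by have [h1 _] := src_edge eU (esym h); rewrite (h1 kK).
- by have [_ h2] := src_edge eU (esym h); rewrite (negbTE (h2 kK)).
- by have [h1 _] := snk_edge eU (esym h); rewrite (h1 kK).
- by have [_ h2] := snk_edge eU (esym h); rewrite (negbTE (h2 kK)).
Qed.

Lemma end_info x e d s y : exch_trav U x (rcons s (e, d)) y ->
  [/\ y.1 \in Rset G (I :\: I') -> ~~ q (e, d), y.1 \in Rset G (I' :\: I) -> q (e, d),
      y.1 \in Cset G (J :\: J') -> q (e, d) & y.1 \in Cset G (J' :\: J) -> ~~ q (e, d)].
Proof.
case=> wk _ _ _ _; have [eU hy] := uwalk_last wk.
have hy1 : y.1 = if d then hd e else tail e by rewrite -hy; case: d {hy wk}; rewrite /ends /= node_fst.
rewrite /q /=.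
split => /imsetP [k kK yk]; move: hy1; rewrite yk; case: d {hy wk} => /= h;
  try (by case: (no_in_src HG (esym h))); try (by case: (no_out_snk HG (esym h))).
- by have [h1 _] := src_edge eU (esym h); rewrite (h1 kK).
- by have [_ h2] := src_edge eU (esym h); rewrite (negbTE (h2 kK)).
- by have [h1 _] := snk_edge eU (esym h); rewrite (h1 kK).
- by have [_ h2] := snk_edge eU (esym h); rewrite (negbTE (h2 kK)).
Qed.

Lemma memT v : (v \in T) = [|| v \in Rset G (I :\: I'), v \in Rset G (I' :\: I),
  v \in Cset G (J :\: J') | v \in Cset G (J' :\: J)].
Proof. by rewrite /Tset /Rset /Cset !imsetU !inE !orbA. Qed.

Lemma trav_T x s y : exch_trav U x s y -> x.1 \in T /\ y.1 \in T.
Proof.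
case=> _ _ _ /eqP dx /eqP dy.
by move: dx dy; rewrite !N1 => /andP [_ ->] /andP [_ ->].
Qed.

End Main.

Theorem lemma4p1 (R : realFieldType) (m n : nat) (G : sedata R m n)
    (I I' : {set 'I_m}) (J J' : {set 'I_n})
    (p p' : 'I_m -> seq (edge G)) (t t' : 'I_m -> 'I_n) :
  is_SEgraph G ->
  is_flow I J p t -> is_flow I' J' p' t' ->
  let Ep := flow_edges I p in
  let Ep' := flow_edges I' p' in
  let U := symdiff Ep Ep' in
  [/\ (* (i) *)
      exists Ps : seq {set edge G},
        [/\ uniq Ps, forall P, P \in Ps <-> exch_path U P &
            (2 * size Ps = #|I :\: I'| + #|I' :\: I| + #|J :\: J'| + #|J' :\: J|)%N],
      (* (ii) set of endvertices *)
      forall v : vert G,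
        (exists x s y, exch_trav U x s y /\ (v = x.1 \/ v = y.1)) <->
        v \in Rset G ((I :\: I') :|: (I' :\: I)) :|: Cset G ((J :\: J') :|: (J' :\: J)),
      (* (ii) types of connections *)
      forall x s y, exch_trav U x s y ->
        [\/ connects x.1 y.1 (Rset G (I :\: I')) (Rset G (I' :\: I)),
            connects x.1 y.1 (Cset G (J :\: J')) (Cset G (J' :\: J)),
            connects x.1 y.1 (Rset G (I :\: I')) (Cset G (J :\: J')) |
            connects x.1 y.1 (Rset G (I' :\: I)) (Cset G (J' :\: J))] &
      (* (iii) opposite directions of phi- and phi'-edges *)
      forall x s y, exch_trav U x s y ->
        (forall ed, ed \in s -> (ed.1 \in Ep -> ed.2) /\ (ed.1 \in Ep' -> ~~ ed.2)) \/
        (forall ed, ed \in s -> (ed.1 \in Ep -> ~~ ed.2) /\ (ed.1 \in Ep' -> ed.2))].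
Proof.
move=> HG HF HF'; cbv zeta.
have Hd := Hdeg HG HF HF'.
split.
- have [Ps [uPs hPs]] := exists_list (exch_path (symdiff (flow_edges I p) (flow_edges I' p'))).
  exists Ps; split => //.
  by rewrite (count_paths HG HF HF' uPs hPs) (cardN HG HF HF') cardT.
- move=> v; change (v \in _) with (v \in Tset G I I' J J'); split.
    move=> [x [s [y [tr [->|->]]]]]; by case: (trav_T HG HF HF' tr).
  move=> vT.
  have : ndeg (symdiff (flow_edges I p) (flow_edges I' p')) (v, false) = 1%N.
    by apply/eqP; rewrite (N1 HG HF HF') /= vT.
  move/(trav_exists Hd) => [s [y tr]].
  by exists (v, false), s, y; split => //; left.
- move=> x s y tr.
  have [xT yT] := trav_T HG HF HF' tr.
  case: s tr => [|[e d] s1] tr; first by case: tr.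
  have [si1 si2 si3 si4] := start_info HG HF HF' tr.
  have eqs := lastI (e, d) s1.
  move: (last (e, d) s1) (belast (e, d) s1) eqs => [e' d'] s2 eqs.
  have tr2 := tr; rewrite eqs in tr2.
  have [ei1 ei2 ei3 ei4] := end_info HG HF HF' tr2.
  have qc : q I p (e', d') = q I p (e, d).
    case: tr => wk _ us _ _; apply: (q_const HG HF HF' wk us).
    by rewrite eqs mem_rcons mem_head.
  rewrite qc in ei1 ei2 ei3 ei4.
  move: xT yT; rewrite !(memT) => xT yT.
  case/or4P: (conn_bool si1 si2 si3 si4 ei1 ei2 ei3 ei4 xT yT) => /orP [] /andP [h1 h2];
    rewrite /connects; by [constructor 1; tauto|constructor 2; tauto|constructor 3; tauto|constructor 4; tauto].
- move=> x s y tr.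
  case: s tr => [|ed0 s1] tr; first by case: tr.
  case: (tr) => wk _ us _ _.
  have qc := q_const HG HF HF' wk us.
  have memU' : forall ed, ed \in ed0 :: s1 -> (ed.1 \in flow_edges I p) (+) (ed.1 \in flow_edges I' p').
    by move=> ed eds; rewrite -memU; exact: walk_inU wk _ eds.
  case hQ : (q I p ed0); [left|right] => ed eds; have := qc ed eds; have := memU' ed eds;
    rewrite hQ /q; case: (ed.1 \in flow_edges I p); case: (ed.1 \in flow_edges I' p');
    case: (ed.2) => //.
Qed.
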